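(* Let $\mathcal{G}=(N,\mathcal{W})$ be an SVG, let $i\neq j$ be players with $j$ a YES-blocker of $\mathcal{G}$, and let $\hat{\mathcal{G}}=\mathcal{G}^{j\to i}$. Let $S\subseteq N\setminus\{i,j\}$ satisfy $S\cup\{i,j\}\notin\mathcal{W}$. Then $$\hat\alpha^-_i(S\cup\{j\})\le \alpha^-_i(S\cup\{j\})+\alpha^-_j(S\cup\{i\}),$$ where $\alpha^-$ denotes NO-efficacy scores of the Recursive Measure in $\mathcal{G}$, and $\hat\alpha^-$ denotes the same in $\hat{\mathcal{G}}$.
   Context: A simple voting game (SVG) is a pair $\mathcal{G}=(N,\mathcal{W})$ with $N$ a nonempty finite set of players and $\mathcal{W}\subseteq 2^N$ monotone, $\emptyset\notin\mathcal{W}$, $N\in\mathcal{W}$. Divisions are identified with their YES-sets $S\subseteq N$; $S$ is winning iff $S\in\mathcal{W}$. Decisiveness and success: - Player $k$ is YES-decisive in $S$ if $k\in S\in\mathcal{W}$ and $S\setminus\{k\}\notin\mathcal{W}$. - Player $k$ is NO-decisive in $S$ if $k\notin S\notin\mathcal{W}$ and $S\cup\{k\}\in\mathcal{W}$. - Player $k$ is successful in $S$ if ($k\in S\in\mathcal{W}$) or ($k\notin S\notin\mathcal{W}$). Loyal children: if $S\in\mathcal{W}$, they are the sets $S\setminus\{m\}\in\mathcal{W}$ with $m\in S$. If $S\notin\mathcal{W}$, they are the sets $S\cup\{m\}\notin\mathcal{W}$ with $m\notin S$. Recursive efficacy score $\alpha_k(S)$: - $\alpha_k(S)=1$ if $k$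 is YES- or NO-decisive in $S$; - $\alpha_k(S)=0$ if $k$ is not successful; - otherwise, the average of $\alpha_k$ over the loyal children of $S$. The NO-efficacy score is $\alpha^-_k(S)=\alpha_k(S)$ if $k\notin S$ and $0$ if $k\in S$. Blockers: $j$ is a YES-blocker if $j\in S$ for all $S\in\mathcal{W}$. Donation game: $\mathcal{G}^{j\to i}$ is the SVG on $N$ in which, for $S\subseteq N\setminus\{i,j\}$: - $S\cup\{i,j\}$ and $S\cup\{i\}$ are winning iff $S\cup\{i,j\}\in\mathcal{W}$; - $S\cup\{j\}$ and $S$ are winning iff $S\in\mathcal{W}$. *)

(* Defs.v *)
From mathcomp Require Import all_boot all_order all_algebra.
Set Implicit Arguments. Unset Strict Implicit. Unset Printing Implicit Defensive.
Import Order.TTheory GRing.Theory Num.Theory.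
Local Open Scope ring_scope.

Section SVG.
Variable N : finType.

(* A simple voting game: winning predicate W on divisions (YES-sets). *)
Definition is_svg (W : {set N} -> bool) : Prop :=
  [/\ (forall S T : {set N}, S \subset T -> W S -> W T), ~~ W set0 & W setT].

Definition yes_decisive (W : {set N} -> bool) (k : N) (S : {set N}) : bool :=
  [&& k \in S, W S & ~~ W (S :\ k)].
Definition no_decisive (W : {set N} -> bool) (k : N) (S : {set N}) : bool :=
  [&& k \notin S, ~~ W S & W (k |: S)].
Definition successful (W : {set N} -> bool) (k : N) (S : {set N}) : bool :=
  ((k \in S) && W S) || ((k \notin S) && ~~ W S).

Definition loyal_children (W : {set N} -> bool) (S : {set N}) : {set {set N}} :=
  if W S then [set S :\ m | m in [set m in S | W (S :\ m)]]
  else [set m |: S | m in [set m in ~: S | ~~ W (m |: S)]].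

(* Fuel-based unfolding of the recursive definition; fuel #|N|.+1 is never
   exhausted (winning children lose one element, losing children gain one). *)
Fixpoint alpha_aux (W : {set N} -> bool) (n : nat) (k : N) (S : {set N}) : rat :=
  match n with
  | 0 => 0
  | n'.+1 =>
      if yes_decisive W k S || no_decisive W k S then 1
      else if ~~ successful W k S then 0
      else (\sum_(T in loyal_children W S) alpha_aux W n' k T)
             / (#|loyal_children W S|)%:R
  end.

Definition alpha (W : {set N} -> bool) (k : N) (S : {set N}) : rat :=
  alpha_aux W #|N|.+1 k S.

Definition alpha_minus (W : {set N} -> bool) (k : N) (S : {set N}) : rat :=
  if k \in S then 0 else alpha W k S.

Definition yes_blocker (W : {set N} -> bool) (j : N) : Prop :=
  forall S : {set N}, W S -> j \in S.

Definition donate (W : {set N} -> bool) (j i : N) (S : {set N}) : bool :=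
  let S0 := S :\ i :\ j in
  if i \in S then W (S0 :|: [set i; j]) else W S0.

End SVG.

(* Main.v *)
Require Import Defs.
From mathcomp Require Import all_boot all_order all_algebra.
From mathcomp Require Import fingroup perm.
Import Order.TTheory GRing.Theory Num.Theory.
Local Open Scope ring_scope.

Section H.
Variable N : finType.
Implicit Types (W : {set N} -> bool) (T U : {set N}).

Lemma inj_add T : {in ~: T &, injective (fun m => m |: T)}.
Proof.
move=> m m'; rewrite !inE => mT m'T /= E.
have: m \in m' |: T by rewrite -E setU11.
rewrite !inE (negbTE mT) orbF. by move/eqP.
Qed.

Lemma loyal_lose W T : ~~ W T -> (forall m, m \notin T -> ~~ W (m |: T)) ->
  loyal_children W T = [set m |: T | m in ~: T].
Proof.
rewrite /loyal_children => /negbTE -> H.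
rewrite (_ : [set m in ~: T | ~~ W (m |: T)] = ~: T) //.
apply/setP => m; rewrite !inE; case: (boolP (m \in T)) => //= mT; by rewrite H.
Qed.

Lemma alpha_in0 W n k T : k \in T -> ~~ W T -> alpha_aux W n k T = 0.
Proof.
case: n => //= n kT /negbTE WT.
by rewrite /yes_decisive /no_decisive /successful kT WT /=.
Qed.

Lemma alpha_ge0 W n k T : 0 <= alpha_aux W n k T.
Proof.
elim: n T => //= n IH T.
case: ifP => // _; case: ifP => // _.
by apply: divr_ge0; [apply: sumr_ge0 => t _; apply: IH | apply: ler0n].
Qed.

End H.

Theorem claim2 (N : finType) (W : {set N} -> bool) (i j : N) (S : {set N}) :
  is_svg W -> i != j -> yes_blocker W j ->
  S \subset ~: [set i; j] -> ~~ W (S :|: [set i; j]) ->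
  alpha_minus (donate W j i) i (j |: S)
    <= alpha_minus W i (j |: S) + alpha_minus W j (i |: S).
Proof.
move=> _ ij Hb HS HW.
set W' := donate W j i.
have F1 : forall T : {set N}, i \notin T -> W' T = false.
  move=> T iT; rewrite /W' /donate (negbTE iT).
  apply/negbTE/negP => /Hb; by rewrite !inE eqxx /= ?andbF.
have F2 : forall T : {set N}, i \in T -> W' T = W (j |: T).
  move=> T iT; rewrite /W' /donate iT; congr W; apply/setP => x; rewrite !inE.
  case: (x =P i) => [->|_] /=; first by rewrite iT /= ?orbT; case: (i == j).
  by case: (x == j); case: (x \in T).
have key : forall n (U : {set N}), U \subset ~: [set i; j] ->
    alpha_aux W' n i (j |: U) = alpha_aux W n j (i |: U).
  elim=> // n IH U HU.
  have iU : i \notin U by apply/negP => /(subsetP HU); rewrite !inE eqxx.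
  have jU : j \notin U by apply/negP => /(subsetP HU); rewrite !inE eqxx orbT.
  have ijU : i \notin j |: U by rewrite !inE negb_or ij.
  have jiU : j \notin i |: U by rewrite !inE negb_or eq_sym ij.
  have E1 : j |: (i |: (j |: U)) = j |: (i |: U).
    by apply/setP=> x; rewrite !inE; case: (x == j); case: (x == i).
  have Wl : ~~ W (i |: U) by apply/negP => /Hb; rewrite (negbTE jiU).
  rewrite /= /yes_decisive /no_decisive /successful (negbTE ijU) (negbTE jiU) /=.
  rewrite F1 // F2 ?setU11 // E1 (negbTE Wl) /=.
  case: ifP => // Wij.
  have L1 : loyal_children W' (j |: U) = [set m |: (j |: U) | m in ~: (j |: U)].
    apply: loyal_lose; first by rewrite F1.
    move=> m _; case: (boolP (i \in m |: (j |: U))) => im; last by rewrite F1.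
    rewrite F2 //.
    move: im; rewrite !inE (negbTE ij) (negbTE iU) /= orbF; move=> /eqP <-.
    by rewrite E1 Wij.
  have L2 : loyal_children W (i |: U) = [set m |: (i |: U) | m in ~: (i |: U)].
    apply: loyal_lose; first by rewrite Wl.
    move=> m _; apply/negP => Wm; have := Hb _ Wm.
    rewrite in_setU1 (negbTE jiU) orbF; move=> /eqP mj.
    by move: Wij; rewrite mj Wm.
  rewrite L1 L2 !big_imset /=; try exact: inj_add.
  rewrite !card_in_imset; try exact: inj_add.
  rewrite [#|~: (j |: U)|]cardsCs [#|~: (i |: U)|]cardsCs !setCK !cardsU1 jU iU.
  congr (_ / _).
  rewrite (reindex_inj (@perm_inj _ (tperm i j : {perm N}))) /=.
  apply: eq_big => m.
    case: tpermP => [-> | -> | mi mj].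
    - by rewrite !in_setC !in_setU1 !eqxx.
    - by rewrite !in_setC !in_setU1 (negbTE ij) eq_sym (negbTE ij) iU jU.
    - by rewrite !in_setC !in_setU1; move/eqP/negbTE: mi => ->; move/eqP/negbTE: mj => ->.
  case: tpermP => [-> | -> | mi mj] H.
  - by move: H; rewrite !inE eqxx.
  - rewrite !alpha_in0 ?setU11 //; first by rewrite Wij.
    by rewrite F2 ?setU11 // E1 Wij.
  rewrite setUCA [m |: (i |: U)]setUCA; apply: IH.
  apply/subsetP => x; rewrite in_setU1 => /orP [/eqP -> | /(subsetP HU) //].
  by rewrite !inE; move/eqP/negbTE: mi => ->; move/eqP/negbTE: mj => ->.
have iS : i \notin S by apply/negP => /(subsetP HS); rewrite !inE eqxx.
have jS : j \notin S by apply/negP => /(subsetP HS); rewrite !inE eqxx orbT.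
rewrite /alpha_minus !in_setU1 (negbTE ij) eq_sym (negbTE ij) (negbTE iS) (negbTE jS) /=.
rewrite /alpha key // -[X in X <= _]add0r lerD2r; exact: alpha_ge0.
Qed.
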